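(* Let $|N\rangle=\frac{1}{\sqrt6}(-|0\rangle+2|1\rangle-|2\rangle)$ be the qutrit Norrell state. Then $$D_{\min,\mathbb{F}_{\rm STAB}}(N)=D_{\max,\mathbb{F}_{\rm STAB}}(N)=D_{s,\mathbb{F}_{\rm STAB}}(N)=\log\tfrac32.$$
   Context: $\log$ base 2. Qutrit computational basis $|0\rangle,|1\rangle,|2\rangle$; $X|j\rangle=|j+1\bmod3\rangle$, $Z|j\rangle=e^{2\pi ij/3}|j\rangle$; the Clifford group consists of unitaries mapping the (generalized) Pauli group generated by $X,Z$ to itself under conjugation up to phases. Pure single-qutrit stabilizer states are $C|0\rangle$ with $C$ Clifford, and $\mathbb{F}_{\rm STAB}$ is their convex hull. $D_{\min,\mathbb{F}}(\rho)=\inf_{\sigma\in\mathbb{F}}(-\log\mathrm{Tr}[\Pi_\rho\sigma])$; $D_{\max,\mathbb{F}}(\rho)=\inf\{\log(1+s):\frac{\rho+s\tau}{1+s}\in\mathbb{F},\tau\text{ a state}\}$; $D_{s,\mathbb{F}}(\rho)=\inf\{\log(1+s):\frac{\rho+s\tau}{1+s}\in\mathbb{F},\tau\in\mathbb{F}\}$. *)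

(* Defs.v *)
From HB Require Import structures.
From mathcomp Require Import all_boot all_order all_algebra.
From mathcomp Require Import complex.
From mathcomp Require Import all_classical all_reals all_analysis.
Set Implicit Arguments. Unset Strict Implicit. Unset Printing Implicit Defensive.
Import Order.TTheory GRing.Theory Num.Theory.
Local Open Scope ring_scope.
Local Open Scope complex_scope.

Section Qutrit.
Variable R : realType.
Local Notation C := R[i].
Local Notation M := 'M[C]_3.

Definition adj m n (A : 'M[C]_(m, n)) : 'M[C]_(n, m) := (map_mx conjc A)^T.

Definition omega : C := Complex (- 2^-1) (Num.sqrt 3 / 2).

Definition Xq : M := \matrix_(i < 3, j < 3) ((i == (j.+1 %% 3)%N :> nat)%:R).
Definition Zq : M := \matrix_(i < 3, j < 3) ((i == j)%:R * omega ^+ j).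

Inductive pauli : M -> Prop :=
| pauli1 : pauli 1%:M
| pauliX : pauli Xq
| pauliZ : pauli Zq
| pauliM P Q : pauli P -> pauli Q -> pauli (P *m Q).

Definition unitary (U : M) : Prop := adj U *m U = 1%:M.

Definition clifford (U : M) : Prop :=
  unitary U /\
  forall P, pauli P -> exists (c : C) (Q : M),
    `|c| = 1 /\ pauli Q /\ U *m P *m adj U = c *: Q.

Definition ket0 : 'cV[C]_3 := \col_(i < 3) ((i == 0 :> nat)%:R).

Definition proj (v : 'cV[C]_3) : M := v *m adj v.

Definition pure_stab (rho : M) : Prop :=
  exists U, clifford U /\ rho = proj (U *m ket0).

Definition F_STAB (rho : M) : Prop :=
  exists (n : nat) (p : 'I_n -> R) (rhos : 'I_n -> M),
    (forall k, 0 <= p k) /\ \sum_k p k = 1 /\ (forall k, pure_stab (rhos k)) /\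
    rho = \sum_k (p k)%:C *: rhos k.

Definition psd (A : M) : Prop :=
  adj A = A /\ forall v : 'cV[C]_3, 0 <= (adj v *m A *m v) 0 0.

Definition state (rho : M) : Prop := psd rho /\ \tr rho = 1.

Definition supp_proj (rho P : M) : Prop :=
  P *m P = P /\ adj P = P /\ (P == rho)%MS.

Definition log2 (x : R) : R := ln x / ln 2.

Definition mlog2 (t : R) : \bar R :=
  if 0 < t then (- log2 t)%:E else +oo%E.

Definition Dmin (F : M -> Prop) (rho : M) : \bar R :=
  ereal_inf [set x | exists sigma P, F sigma /\ supp_proj rho P /\
      x = mlog2 (complex.Re (\tr (P *m sigma)))].

Definition Dmax (F : M -> Prop) (rho : M) : \bar R :=
  ereal_inf [set x | exists (s : R) tau, 0 <= s /\ state tau /\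
      F ((1 + s)^-1%:C *: (rho + s%:C *: tau)) /\ x = (log2 (1 + s))%:E].

Definition Ds (F : M -> Prop) (rho : M) : \bar R :=
  ereal_inf [set x | exists (s : R) tau, 0 <= s /\ F tau /\
      F ((1 + s)^-1%:C *: (rho + s%:C *: tau)) /\ x = (log2 (1 + s))%:E].

Definition norrell_ket : 'cV[C]_3 :=
  (Num.sqrt 6)^-1%:C *: \col_(i < 3) (if i == 1 :> nat then 2 else -1).

Definition norrell : M := proj norrell_ket.

End Qutrit.

(* Main.v *)
Require Import Defs.
From HB Require Import structures.
From mathcomp Require Import all_boot all_order all_algebra.
From mathcomp Require Import complex.
From mathcomp Require Import all_classical all_reals all_analysis.
Import Order.TTheory GRing.Theory Num.Theory.
Local Open Scope ring_scope.
From mathcomp Require Import ring lra.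
Set Implicit Arguments. Unset Strict Implicit. Unset Printing Implicit Defensive.
Local Open Scope complex_scope.

Section Qt.
Variable R : realType.
Local Notation C := R[i].
Local Notation M := 'M[C]_3.
Local Notation w := (omega R).

Lemma ReD (x y : C) : complex.Re (x + y) = complex.Re x + complex.Re y.
Proof. by case: x; case: y. Qed.
Lemma ImD (x y : C) : complex.Im (x + y) = complex.Im x + complex.Im y.
Proof. by case: x; case: y. Qed.
Lemma ReM (x y : C) : complex.Re (x * y) = complex.Re x * complex.Re y - complex.Im x * complex.Im y.
Proof. by case: x; case: y. Qed.
Lemma ImM (x y : C) : complex.Im (x * y) = complex.Re x * complex.Im y + complex.Im x * complex.Re y.
Proof. by case: x => a b; case: y => c d /=; ring. Qed.
Lemma ReN (x : C) : complex.Re (- x) = - complex.Re x.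
Proof. by case: x. Qed.
Lemma ImN (x : C) : complex.Im (- x) = - complex.Im x.
Proof. by case: x. Qed.
Lemma ReJ (x : C) : complex.Re (x^*) = complex.Re x.
Proof. by case: x. Qed.
Lemma ImJ (x : C) : complex.Im (x^*) = - complex.Im x.
Proof. by case: x. Qed.
Lemma ReR (x : R) : complex.Re (x%:C) = x. Proof. by []. Qed.
Lemma ImR (x : R) : complex.Im (x%:C) = 0. Proof. by []. Qed.
Lemma Re0 : complex.Re (0 : C) = 0. Proof. by []. Qed.
Lemma Im0 : complex.Im (0 : C) = 0. Proof. by []. Qed.
Lemma Re1 : complex.Re (1 : C) = 1. Proof. by []. Qed.
Lemma Im1 : complex.Im (1 : C) = 0. Proof. by []. Qed.
Lemma Ren n : complex.Re (n%:R : C) = n%:R.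
Proof. elim: n => // n IH; by rewrite !mulrS ReD IH. Qed.
Lemma Imn n : complex.Im (n%:R : C) = 0.
Proof. elim: n => // n IH; by rewrite !mulrS ImD IH addr0. Qed.
Lemma Rew : complex.Re w = - 2^-1. Proof. by []. Qed.
Lemma Imw : complex.Im w = Num.sqrt 3 / 2. Proof. by []. Qed.

Lemma ceq (x y : C) : complex.Re x = complex.Re y -> complex.Im x = complex.Im y -> x = y.
Proof. by case: x; case: y => /= ? ? ? ? -> ->. Qed.

Lemma s3 : Num.sqrt (3 : R) * Num.sqrt 3 = 3.
Proof. by rewrite -expr2 sqr_sqrtr // ler0n. Qed.

Lemma ReC (a b : R) : complex.Re (a +i* b) = a. Proof. by []. Qed.
Lemma ImC (a b : R) : complex.Im (a +i* b) = b. Proof. by []. Qed.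
Ltac cnorm := rewrite ?(ReC, ImC, ReD, ImD, ReM, ImM, ReN, ImN, ReJ, ImJ, ReR, ImR, Re0, Im0, Re1, Im1, Ren, Imn, Rew, Imw).
Lemma s3p n : Num.sqrt (3:R) ^+ (2 * n) = 3 ^+ n.
Proof. by rewrite exprM -[_ ^+ 2]/(_ * _) s3. Qed.
Lemma s3q n : Num.sqrt (3:R) ^+ (2 * n).+1 = 3 ^+ n * Num.sqrt 3.
Proof. by rewrite exprSr s3p. Qed.
Ltac csolve := apply: ceq; cnorm;
  have := s3p 1; have := s3q 1; have := s3p 2; have := s3q 2; have := s3p 3; have := s3q 3;
  have := s3p 4; have := s3q 4; rewrite /= ?expr0 ?expr1 ?exprS ?mulr1; lra.


Local Notation X := (Xq R).
Local Notation Z := (Zq R).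
Local Notation adj := (@adj R _ _).

Lemma mul3 m (A : 'M[C]_(m,3)) n (B : 'M[C]_(3,n)) i j :
  (A *m B) i j = A i 0 * B 0 j + A i 1 * B 1 j + A i 2 * B 2 j.
Proof. rewrite !mxE !big_ord_recr big_ord0 /= add0r. by congr (A i _ * B _ j + A i _ * B _ j + A i _ * B _ j); apply: val_inj. Qed.

Lemma sum3 (f : 'I_3 -> C) : \sum_(j < 3) f j = f 0 + f 1 + f 2.
Proof. rewrite !big_ord_recr big_ord0 /= add0r. by congr (f _ + f _ + f _); apply: val_inj. Qed.

Lemma adjM m n p (A : 'M[C]_(m,n)) (B : 'M[C]_(n,p)) : adj (A *m B) = adj B *m adj A.
Proof. by rewrite /Defs.adj map_mxM trmx_mul. Qed.
Lemma adjZ m n (c : C) (A : 'M[C]_(m,n)) : adj (c *: A) = c^* *: adj A.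
Proof. by apply/matrixP => i j; rewrite !mxE rmorphM. Qed.
Lemma adjK m n (A : 'M[C]_(m,n)) : adj (adj A) = A.
Proof. by apply/matrixP => i j; rewrite !mxE conjcK. Qed.
Lemma adjD m n (A B : 'M[C]_(m,n)) : adj (A + B) = adj A + adj B.
Proof. by apply/matrixP => i j; rewrite !mxE rmorphD. Qed.
Lemma adj1 : adj (1%:M : M) = 1%:M.
Proof. by apply/matrixP => i j; rewrite !mxE eq_sym; apply: ceq; rewrite ?ReJ ?ImJ ?Imn ?oppr0. Qed.

Lemma unitaryC U : unitary U -> U *m adj U = 1%:M.
Proof. by move=> H; apply: mulmx1C. Qed.

Definition crel (U P : M) := exists (c : C) (Q : M), `|c| = 1 /\ pauli Q /\ U *m P = c *: (Q *m U).

Lemma clifford_of U : unitary U -> crel U X -> crel U Z -> clifford U.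
Proof.
move=> uU hX hZ; split => // P hP.
suff [c [Q [c1 [pQ e]]]] : crel U P.
  exists c, Q; split => //; split => //.
  by rewrite e -scalemxAl -mulmxA unitaryC // mulmx1.
elim: hP => //.
- exists 1, 1%:M; split; first by rewrite normr1.
  by split; [exact: pauli1 | rewrite mulmx1 mul1mx scale1r].
- move=> P1 Q1 _ [c [P' [c1 [pP eP]]]] _ [d [Q' [d1 [pQ eQ]]]].
  exists (c * d), (P' *m Q'); split; first by rewrite normrM c1 d1 mulr1.
  split; first exact: pauliM.
  by rewrite mulmxA eP -scalemxAl -mulmxA eQ -scalemxAr scalerA mulmxA.
Qed.

Lemma clifford_mul U V : clifford U -> clifford V -> @clifford R (U *m V).
Proof.
move=> [uU hU] [uV hV]; split.
  by rewrite /unitary adjM mulmxA -(mulmxA (adj V)) uU mulmx1 uV.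
move=> P hP; have [c [Q [c1 [pQ e]]]] := hV P hP.
have [d [Q' [d1 [pQ' e']]]] := hU Q pQ.
exists (c * d), Q'; split; first by rewrite normrM c1 d1 mulr1.
split => //.
have -> : U *m V *m P *m adj (U *m V) = U *m (V *m P *m adj V) *m adj U.
  by rewrite adjM !mulmxA.
by rewrite e -scalemxAr -scalemxAl e' scalerA.
Qed.

Ltac mxsolve := apply/matrixP;
  case=> [[|[|[|?]]] ?] //; case=> [[|[|[|?]]] ?] //;
  rewrite !mxE ?sum3 /= !mxE ?sum3 /= ?mxE /= ?expr0 ?exprS ?(mul0r, mulr0, add0r, addr0, mul1r, mulr1);
  csolve.

Definition F0 : M := \matrix_(i < 3, j < 3) w ^+ (i * j).
Definition Dm : M := \matrix_(i < 3, j < 3) ((i == j)%:R * (if i == 1 :> nat then w else 1)).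

Lemma unitaryX : unitary X.
Proof. rewrite /unitary. mxsolve. Qed.
Lemma F0X : F0 *m X = 1 *: (Z *m F0).
Proof. mxsolve. Qed.
Lemma F0Z : F0 *m Z = 1 *: ((X *m X) *m F0).
Proof. mxsolve. Qed.
Lemma F0F0 : adj F0 *m F0 = 3%:R *: 1%:M.
Proof. mxsolve. Qed.
Lemma DX : Dm *m X = w *: ((X *m Z) *m Dm).
Proof. mxsolve. Qed.
Lemma DZ : Dm *m Z = 1 *: (Z *m Dm).
Proof. mxsolve. Qed.
Lemma unitaryD : unitary Dm.
Proof. rewrite /unitary. mxsolve. Qed.
End Qt.
Arguments F0 {R}. Arguments Dm {R}.

Section Qt2.
Variable R : realType.
Local Notation C := R[i].
Local Notation M := 'M[C]_3.
Local Notation w := (omega R).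
Local Notation X := (Xq R).
Local Notation Z := (Zq R).
Local Notation adj := (@Defs.adj R _ _).
Local Notation proj := (@Defs.proj R).

Ltac cnorm := rewrite ?(ReC, ImC, ReD, ImD, ReM, ImM, ReN, ImN, ReJ, ImJ, ReR, ImR, Re0, Im0, Re1, Im1, Ren, Imn, Rew, Imw).
Ltac csolve := apply: ceq; cnorm;
  have := s3p R 1; have := s3q R 1; have := s3p R 2; have := s3q R 2; have := s3p R 3; have := s3q R 3;
  have := s3p R 4; have := s3q R 4; rewrite /= ?expr0 ?expr1 ?exprS ?mulr1; lra.
Ltac mxsolve := try unfold ket0, Defs.adj, Defs.proj; apply/matrixP;
  case=> [[|[|[|?]]] ?] //; case=> [[|[|[|?]]] ?] //;
  rewrite !mxE; do 3 (rewrite ?sum3 ?big_ord1 /= ?mxE /=);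
  rewrite ?expr0 ?exprS ?(mul0r, mulr0, add0r, addr0, mul1r, mulr1);
  csolve.
Ltac cvsolve := try unfold ket0, Defs.adj, Defs.proj; apply/matrixP;
  case=> [[|[|[|?]]] ?] //; case=> [[|?] ?] //;
  rewrite !mxE; do 4 (rewrite ?sum3 ?big_ord1 /= ?mxE /=);
  rewrite ?expr0 ?exprS ?(mul0r, mulr0, add0r, addr0, mul1r, mulr1);
  csolve.

Lemma normw : `|w| = 1.
Proof.
rewrite normc_def Rew Imw.
have -> : (- 2^-1) ^+ 2 + (Num.sqrt 3 / 2) ^+ 2 = 1 :> R.
  by have := s3 R; rewrite !expr2; lra.
by rewrite sqrtr1.
Qed.
Lemma normwX n : `|w ^+ n| = 1.
Proof. by rewrite normrX normw expr1n. Qed.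

Lemma XZ : X *m Z = (w * w) *: (Z *m X).
Proof. mxsolve. Qed.
Lemma ZX : Z *m X = w *: (X *m Z).
Proof. mxsolve. Qed.

Lemma crel_scale (k : C) U0 P : crel U0 P -> crel (k *: U0) P.
Proof.
move=> [c [Q [c1 [pQ e]]]]; exists c, Q; do 2 split => //.
by rewrite -scalemxAl e -scalemxAr !scalerA mulrC.
Qed.

Lemma cliffX : clifford X.
Proof.
apply: clifford_of (unitaryX R) _ _.
- exists 1, X; split; first by rewrite normr1.
  by split; [exact: pauliX | rewrite scale1r].
- exists (w * w), Z; split; first by rewrite normrM normw mulr1.
  by split; [exact: pauliZ | exact: XZ].
Qed.

Definition k3 : R := (Num.sqrt 3)^-1.
Definition Fm : M := k3%:C *: F0.
Lemma k3k3 : k3 * k3 = 3^-1.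
Proof. by rewrite /k3 -invfM s3. Qed.

Lemma unitaryF : unitary Fm.
Proof.
rewrite /unitary /Fm adjZ -scalemxAl -scalemxAr F0F0 !scalerA.
match goal with |- ?a *: _ = _ => have -> : a = 1 end; last by rewrite scale1r.
by apply: ceq; cnorm; have := k3k3; lra.
Qed.

Lemma cliffF : clifford Fm.
Proof.
apply: clifford_of unitaryF _ _; apply: crel_scale.
- exists 1, Z; split; first by rewrite normr1.
  by split; [exact: pauliZ | exact: F0X].
- exists 1, (X *m X); split; first by rewrite normr1.
  by split; [exact: pauliM (pauliX R) (pauliX R) | exact: F0Z].
Qed.

Lemma cliffD : @clifford R Dm.
Proof.
apply: clifford_of (unitaryD R) _ _.
- exists w, (X *m Z); split; first exact: normw.
  by split; [exact: pauliM (pauliX R) (pauliZ R) | exact: DX].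
- exists 1, Z; split; first by rewrite normr1.
  by split; [exact: pauliZ | exact: DZ].
Qed.

Definition e1 : 'cV[C]_3 := \col_(i < 3) ((i == 1 :> nat)%:R).
Definition c111 : 'cV[C]_3 := \col_(i < 3) 1.
Definition ca : 'cV[C]_3 := \col_(i < 3) (if i == 1 :> nat then w else 1).
Definition cb : 'cV[C]_3 := \col_(i < 3) (if i == 1 :> nat then w * w else 1).

Lemma Xket : X *m ket0 R = e1.
Proof. cvsolve. Qed.
Lemma F0ket : F0 *m ket0 R = c111.
Proof. cvsolve. Qed.
Lemma DF0ket : Dm *m F0 *m ket0 R = ca.
Proof. cvsolve. Qed.
Lemma DDF0ket : Dm *m (Dm *m F0) *m ket0 R = cb.
Proof. cvsolve. Qed.

Lemma Fket : Fm *m ket0 R = k3%:C *: c111.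
Proof. by rewrite /Fm -scalemxAl F0ket. Qed.
Lemma DFket : Dm *m Fm *m ket0 R = k3%:C *: ca.
Proof. by rewrite /Fm -scalemxAr -scalemxAl DF0ket. Qed.
Lemma DDFket : Dm *m (Dm *m Fm) *m ket0 R = k3%:C *: cb.
Proof. by rewrite /Fm -!scalemxAr -scalemxAl DDF0ket. Qed.

Lemma projZ (k : R) (v : 'cV[C]_3) : proj (k%:C *: v) = (k * k)%:C *: proj v.
Proof.
rewrite /proj adjZ -scalemxAl -scalemxAr scalerA.
match goal with |- ?a *: _ = ?b *: _ => have -> : a = b end => //.
by apply: ceq; cnorm; lra.
Qed.

Lemma proj_mul (U : M) (v : 'cV[C]_3) : proj (U *m v) = U *m proj v *m adj U.
Proof. by rewrite /proj adjM !mulmxA. Qed.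

Lemma proj_ket0 : proj (ket0 R) = (3^-1 : R)%:C *: (1%:M + Z + Z *m Z).
Proof. rewrite /proj. mxsolve. Qed.

End Qt2.
Arguments k3 {R}. Arguments Fm {R}. Arguments e1 {R}. Arguments c111 {R}. Arguments ca {R}. Arguments cb {R}.

Section Qt3.
Variable R : realType.
Local Notation C := R[i].
Local Notation M := 'M[C]_3.
Local Notation w := (omega R).
Local Notation X := (Xq R).
Local Notation Z := (Zq R).
Local Notation adj := (@Defs.adj R _ _).
Local Notation proj := (@Defs.proj R).

Ltac cnorm := rewrite ?(ReC, ImC, ReD, ImD, ReM, ImM, ReN, ImN, ReJ, ImJ, ReR, ImR, Re0, Im0, Re1, Im1, Ren, Imn, Rew, Imw).
Ltac csolve := apply: ceq; cnorm;
  have := s3p R 1; have := s3q R 1; have := s3p R 2; have := s3q R 2; have := s3p R 3; have := s3q R 3;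
  have := s3p R 4; have := s3q R 4; rewrite /= ?expr0 ?expr1 ?exprS ?mulr1; lra.
Ltac mxsolve := try unfold ket0, Defs.adj, Defs.proj; apply/matrixP;
  case=> [[|[|[|?]]] ?] //; case=> [[|[|[|?]]] ?] //;
  rewrite !mxE; do 3 (rewrite ?sum3 ?big_ord1 /= ?mxE /=);
  rewrite ?expr0 ?exprS ?(mul0r, mulr0, add0r, addr0, mul1r, mulr1);
  csolve.
Ltac cvsolve := try unfold ket0, Defs.adj, Defs.proj; apply/matrixP;
  case=> [[|[|[|?]]] ?] //; case=> [[|?] ?] //;
  rewrite !mxE; do 4 (rewrite ?sum3 ?big_ord1 /= ?mxE /=);
  rewrite ?expr0 ?exprS ?(mul0r, mulr0, add0r, addr0, mul1r, mulr1);
  csolve.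


Definition mpow (A : M) n := iter n (mulmx A) 1%:M.
Lemma mpowS A n : mpow A n.+1 = A *m mpow A n. Proof. by []. Qed.
Lemma mpowD A m n : mpow A (m + n) = mpow A m *m mpow A n.
Proof.
elim: m => [|m IH]; first by rewrite mul1mx.
by rewrite addSn !mpowS IH mulmxA.
Qed.
Lemma mpow_mod A n : mpow A 3 = 1%:M -> mpow A (n %% 3)%N = mpow A n.
Proof.
move=> h; rewrite [in RHS](div.divn_eq n 3) mpowD.
suff -> : mpow A (n %/ 3 * 3)%N = 1%:M by rewrite mul1mx.
elim: (n %/ 3)%N => [|q IH] //.
by rewrite mulSn mpowD h IH mul1mx.
Qed.

Lemma X3 : mpow X 3 = 1%:M.
Proof. rewrite /mpow /=. mxsolve. Qed.
Lemma Z3 : mpow Z 3 = 1%:M.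
Proof. rewrite /mpow /=. mxsolve. Qed.

Lemma ZbX b : mpow Z b *m X = w ^+ b *: (X *m mpow Z b).
Proof.
elim: b => [|b IH]; first by rewrite /= mul1mx mulmx1 expr0 scale1r.
rewrite mpowS -mulmxA IH -scalemxAr mulmxA (mulmxA Z X) ZX -scalemxAl scalerA.
by rewrite -exprSr.
Qed.

Lemma ZbXc b c : mpow Z b *m mpow X c = w ^+ (b * c)%N *: (mpow X c *m mpow Z b).
Proof.
elim: c => [|c IH]; first by rewrite /= mul1mx mulmx1 muln0 expr0 scale1r.
rewrite !mpowS mulmxA ZbX -scalemxAl -mulmxA IH -scalemxAr scalerA -exprD mulnS.
by rewrite mulmxA.
Qed.

Lemma pauli_nf Q : pauli Q -> exists (l : C) a b, `|l| = 1 /\ Q = l *: (mpow X a *m mpow Z b).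
Proof.
elim.
- by exists 1, 0%N, 0%N; rewrite normr1 scale1r mulmx1.
- by exists 1, 1%N, 0%N; rewrite normr1 scale1r /= !mulmx1.
- by exists 1, 0%N, 1%N; rewrite normr1 scale1r /= mulmx1 mul1mx.
- move=> P Q0 _ [l [a [b [l1 ->]]]] _ [m [c [d [m1 ->]]]].
  exists (l * m * w ^+ (b * c)%N), (a + c)%N, (b + d)%N; split.
    by rewrite !normrM l1 m1 normwX !mulr1.
  rewrite -scalemxAl -scalemxAr scalerA -mulmxA (mulmxA (mpow Z b)) ZbXc.
  rewrite -scalemxAl -scalemxAr scalerA !mpowD.
  by rewrite !mulmxA.
Qed.

Lemma pauli_nf3 Q : pauli Q -> exists (l : C) a b,
  [/\ `|l| = 1, (a < 3)%N, (b < 3)%N & Q = l *: (mpow X a *m mpow Z b)].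
Proof.
move=> /pauli_nf [l [a [b [l1 ->]]]].
exists l, (a %% 3)%N, (b %% 3)%N; split => //; try exact: ltn_mod.
by rewrite (mpow_mod _ X3) (mpow_mod _ Z3).
Qed.

End Qt3.
Arguments mpow {R}.

Section Qt4.
Variable R : realType.
Local Notation C := R[i].
Local Notation M := 'M[C]_3.
Local Notation w := (omega R).
Local Notation X := (Xq R).
Local Notation Z := (Zq R).
Local Notation adj := (@Defs.adj R _ _).
Local Notation proj := (@Defs.proj R).

Ltac cnorm := rewrite ?(ReC, ImC, ReD, ImD, ReM, ImM, ReN, ImN, ReJ, ImJ, ReR, ImR, Re0, Im0, Re1, Im1, Ren, Imn, Rew, Imw).
Ltac csolve := apply: ceq; cnorm;
  have := s3p R 1; have := s3q R 1; have := s3p R 2; have := s3q R 2; have := s3p R 3; have := s3q R 3;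
  have := s3p R 4; have := s3q R 4; rewrite /= ?expr0 ?expr1 ?exprS ?mulr1; lra.
Ltac mxsolve := try unfold ket0, Defs.adj, Defs.proj; apply/matrixP;
  case=> [[|[|[|?]]] ?] //; case=> [[|[|[|?]]] ?] //;
  rewrite !mxE; do 3 (rewrite ?sum3 ?big_ord1 /= ?mxE /=);
  rewrite ?expr0 ?exprS ?(mul0r, mulr0, add0r, addr0, mul1r, mulr1);
  csolve.
Ltac cvsolve := try unfold ket0, Defs.adj, Defs.proj; apply/matrixP;
  case=> [[|[|[|?]]] ?] //; case=> [[|?] ?] //;
  rewrite !mxE; do 4 (rewrite ?sum3 ?big_ord1 /= ?mxE /=);
  rewrite ?expr0 ?exprS ?(mul0r, mulr0, add0r, addr0, mul1r, mulr1);
  csolve.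



Definition v0 : 'cV[C]_3 := \col_(i < 3) (if i == 1 :> nat then 2 else -1).
Definition ev (A : M) : C := (adj v0 *m A *m v0) 0 0.

Lemma evD A B : ev (A + B) = ev A + ev B.
Proof. by rewrite /ev mulmxDr mulmxDl mxE. Qed.
Lemma evZ c A : ev (c *: A) = c * ev A.
Proof. by rewrite /ev -scalemxAr -scalemxAl mxE. Qed.
Lemma ev0 : ev 0 = 0.
Proof. by rewrite /ev mulmx0 mul0mx mxE. Qed.
Lemma ev_sum n (f : 'I_n -> M) : ev (\sum_k f k) = \sum_k ev (f k).
Proof. exact: (big_morph ev evD ev0). Qed.

Lemma w3 : w ^+ 3 = 1.
Proof. rewrite !exprS expr0 mulr1. csolve. Qed.
Lemma w4 : w ^+ 4 = w.
Proof. by rewrite exprS w3 mulr1. Qed.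

Definition X2 : M := \matrix_(i < 3, j < 3) ((i == (j.+2 %% 3)%N :> nat)%:R).
Definition Zd k : M := \matrix_(i < 3, j < 3) ((i == j)%:R * w ^+ (k * j)%N).
Lemma XX : mpow X 2 = X2.
Proof. rewrite /mpow /= mulmx1. mxsolve. Qed.
Lemma ZZ : mpow Z 2 = Zd 2.
Proof. rewrite /mpow /= mulmx1. mxsolve. Qed.
Lemma Z1 : mpow Z 1 = Zd 1.
Proof. rewrite /mpow /= mulmx1. mxsolve. Qed.
Lemma X1 : mpow X 1 = X.
Proof. by rewrite /mpow /= mulmx1. Qed.
Lemma X0Z b : mpow X 0 *m mpow Z b = mpow Z b.
Proof. by rewrite mul1mx. Qed.
Lemma XaZ0 a : mpow X a *m mpow Z 0 = mpow X a.
Proof. by rewrite mulmx1. Qed.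

Ltac evsolve := rewrite ?X0Z ?XaZ0 ?XX ?ZZ ?Z1 ?X1 /ev /v0 /X2 /Zd /=; try unfold Defs.adj;
  rewrite !mxE; do 4 (rewrite ?sum3 ?big_ord1 /= ?mxE /=);
  rewrite ?w4 ?w3 ?expr0 ?exprS ?(mul0r, mulr0, add0r, addr0, mul1r, mulr1);
  csolve.

Lemma ev1 : ev 1%:M = 6%:R.
Proof. evsolve. Qed.

Lemma ev01 : ev (mpow X 0 *m mpow Z 1) = 3%:R * w.
Proof. evsolve. Qed.
Lemma ev02 : ev (mpow X 0 *m mpow Z 2) = 3%:R * (w * w).
Proof. evsolve. Qed.
Lemma ev10 : ev (mpow X 1 *m mpow Z 0) = - 3%:R.
Proof. evsolve. Qed.
Lemma ev11 : ev (mpow X 1 *m mpow Z 1) = 3%:R * (w * w).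
Proof. evsolve. Qed.
Lemma ev12 : ev (mpow X 1 *m mpow Z 2) = 3%:R * w.
Proof. evsolve. Qed.
Lemma ev20 : ev (mpow X 2 *m mpow Z 0) = - 3%:R.
Proof. evsolve. Qed.
Lemma ev21 : ev (mpow X 2 *m mpow Z 1) = 3%:R.
Proof. evsolve. Qed.
Lemma ev22 : ev (mpow X 2 *m mpow Z 2) = 3%:R.
Proof. evsolve. Qed.
End Qt4.

Section Qt5.
Variable R : realType.
Local Notation C := R[i].
Local Notation M := 'M[C]_3.
Local Notation w := (omega R).
Local Notation X := (Xq R).
Local Notation Z := (Zq R).
Local Notation adj := (@Defs.adj R _ _).
Local Notation proj := (@Defs.proj R).

Ltac cnorm := rewrite ?(ReC, ImC, ReD, ImD, ReM, ImM, ReN, ImN, ReJ, ImJ, ReR, ImR, Re0, Im0, Re1, Im1, Ren, Imn, Rew, Imw).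
Ltac csolve := apply: ceq; cnorm;
  have := s3p R 1; have := s3q R 1; have := s3p R 2; have := s3q R 2; have := s3p R 3; have := s3q R 3;
  have := s3p R 4; have := s3q R 4; rewrite /= ?expr0 ?expr1 ?exprS ?mulr1; lra.
Ltac mxsolve := try unfold ket0, Defs.adj, Defs.proj; apply/matrixP;
  case=> [[|[|[|?]]] ?] //; case=> [[|[|[|?]]] ?] //;
  rewrite !mxE; do 3 (rewrite ?sum3 ?big_ord1 /= ?mxE /=);
  rewrite ?expr0 ?exprS ?(mul0r, mulr0, add0r, addr0, mul1r, mulr1);
  csolve.
Ltac cvsolve := try unfold ket0, Defs.adj, Defs.proj; apply/matrixP;
  case=> [[|[|[|?]]] ?] //; case=> [[|?] ?] //;
  rewrite !mxE; do 4 (rewrite ?sum3 ?big_ord1 /= ?mxE /=);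
  rewrite ?expr0 ?exprS ?(mul0r, mulr0, add0r, addr0, mul1r, mulr1);
  csolve.




Local Notation ev := (@ev R).
Local Notation mpow := (@mpow R).

Lemma reb (u z : C) : `|u| = 1 -> complex.Re z ^+ 2 + complex.Im z ^+ 2 = 9 ->
  complex.Re (u * z) <= 3.
Proof.
move=> hu hz.
have hu2 : complex.Re u ^+ 2 + complex.Im u ^+ 2 = 1.
  move: hu; rewrite normc_def => /(congr1 (@complex.Re R)) /= h.
  by rewrite -[LHS]sqr_sqrtr ?h ?expr1n // addr_ge0 // sqr_ge0.
rewrite ReM.
have := sqr_ge0 (3 * complex.Re u - complex.Re z).
have := sqr_ge0 (3 * complex.Im u + complex.Im z).
nra.
Qed.

Lemma nine (z : C) : [\/ z = 3%:R * w, z = 3%:R * (w * w), z = - 3%:R | z = 3%:R] ->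
  complex.Re z ^+ 2 + complex.Im z ^+ 2 = 9.
Proof.
have h2 := s3p R 1; have h4 := s3p R 2; rewrite /= ?expr0 ?exprS ?mulr1 in h2 h4.
by case=> ->; cnorm; rewrite ?expr2; lra.
Qed.

Lemma evnf a b : (a < 3)%N -> (b < 3)%N -> ~~ ((a == 0%N) && (b == 0%N)) ->
  complex.Re (ev (mpow X a *m mpow Z b)) ^+ 2 + complex.Im (ev (mpow X a *m mpow Z b)) ^+ 2 = 9.
Proof.
case: a => [|[|[|a]]] // _; case: b => [|[|[|b]]] // _ H; apply: nine.
- by rewrite ev01; apply: Or41.
- by rewrite ev02; apply: Or42.
- by rewrite ev10; apply: Or43.
- by rewrite ev11; apply: Or42.
- by rewrite ev12; apply: Or41.
- by rewrite ev20; apply: Or43.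
- by rewrite ev21; apply: Or44.
- by rewrite ev22; apply: Or44.
Qed.

Lemma Zne : Z 0 0 != Z 1 1.
Proof.
rewrite !mxE /= expr0 expr1 !mul1r; apply/eqP => /(congr1 (@complex.Im R)).
rewrite Im1 Imw => h; have : 0 < Num.sqrt (3:R) by rewrite sqrtr_gt0 ltr0n.
lra.
Qed.
Lemma ZZne : (Z *m Z) 0 0 != (Z *m Z) 1 1.
Proof.
rewrite !mxE !sum3 !mxE /= !expr0 !expr1 ?(mul0r, mulr0, add0r, addr0, mul1r, mulr1).
apply/eqP => /(congr1 (@complex.Im R)); cnorm => h.
have : 0 < Num.sqrt (3:R) by rewrite sqrtr_gt0 ltr0n.
lra.
Qed.

Lemma keyQ (U P : M) (c : C) (Q : M) : clifford U -> P 0 0 != P 1 1 -> pauli Q ->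
  U *m P *m adj U = c *: Q -> `|c| = 1 -> complex.Re (c * ev Q) <= 3.
Proof.
move=> [uU _] hP pQ e c1.
have [l [a [b [l1 ha hb eQ]]]] := pauli_nf3 pQ.
rewrite eQ evZ mulrA.
have [/andP [/eqP a0 /eqP b0] | nz] := boolP ((a == 0%N) && (b == 0%N)).
  exfalso; move: e; rewrite eQ a0 b0 /= mulmx1 => e.
  have eP : P = (c * l) *: 1%:M.
    have -> : P = adj U *m (U *m P *m adj U) *m U.
      by rewrite !mulmxA uU mul1mx -mulmxA uU mulmx1.
    by rewrite e scalerA -scalemxAr -scalemxAl mulmx1 uU.
  by move: hP; rewrite eP !mxE /= eqxx.
apply: reb; first by rewrite normrM c1 l1 mulr1.
exact: evnf.
Qed.

Lemma key U : clifford U -> complex.Re (ev (proj (U *m ket0 R))) <= 4.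
Proof.
move=> cU; have [uU hU] := cU.
have [c1 [Q1 [n1 [p1 e1']]]] := hU Z (pauliZ R).
have [c2 [Q2 [n2 [p2 e2']]]] := hU (Z *m Z) (pauliM (pauliZ R) (pauliZ R)).
have b1 := keyQ cU Zne p1 e1' n1.
have b2 := keyQ cU ZZne p2 e2' n2.
rewrite proj_mul proj_ket0 -scalemxAr -scalemxAl !mulmxDr !mulmxDl mulmx1 (unitaryC uU) e1' e2'.
rewrite evZ !evD !evZ ev1.
rewrite ReM ReR ImR mul0r subr0 !ReD Re1.
lra.
Qed.

Lemma quad (a v : 'cV[C]_3) :
  (adj a *m proj v *m a) 0 0 = (adj a *m v) 0 0 * ((adj a *m v) 0 0)^*.
Proof.
have -> : adj a *m proj v *m a = (adj a *m v) *m adj (adj a *m v).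
  by rewrite /Defs.proj adjM adjK !mulmxA.
by rewrite [LHS]mxE big_ord1 /Defs.adj !mxE.
Qed.

Lemma ev_proj_ge0 v : 0 <= complex.Re (ev (proj v)).
Proof.
rewrite /ev quad; set x := (adj _ *m v) 0 0.
cnorm; nra.
Qed.

Lemma Re_sum n (f : 'I_n -> C) : complex.Re (\sum_k f k) = \sum_k complex.Re (f k).
Proof.
elim/big_rec2: _ => [|i y1 y2 _ <-]; first by rewrite Re0.
by rewrite ReD.
Qed.

Lemma fstab_ev s : F_STAB s -> complex.Re (ev s) <= 4 /\ 0 <= complex.Re (ev s).
Proof.
move=> [n [p [rhos [p0 [p1 [ps ->]]]]]].
rewrite ev_sum Re_sum.
have hk k : complex.Re (ev ((p k)%:C *: rhos k)) = p k * complex.Re (ev (rhos k)).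
  by rewrite evZ ReM ReR ImR mul0r subr0.
under eq_bigr => k _ do rewrite hk.
split.
- have -> : (4:R) = \sum_k p k * 4 by rewrite -mulr_suml p1 mul1r.
  apply: ler_sum => k _; apply: ler_wpM2l => //.
  by have [U [cU ->]] := ps k; exact: key.
- apply: sumr_ge0 => k _; apply: mulr_ge0 => //.
  by have [U [cU ->]] := ps k; exact: ev_proj_ge0.
Qed.
End Qt5.

Section Qt6.
Variable R : realType.
Local Notation C := R[i].
Local Notation M := 'M[C]_3.
Local Notation w := (omega R).
Local Notation X := (Xq R).
Local Notation Z := (Zq R).
Local Notation adj := (@Defs.adj R _ _).
Local Notation proj := (@Defs.proj R).

Ltac cnorm := rewrite ?(ReC, ImC, ReD, ImD, ReM, ImM, ReN, ImN, ReJ, ImJ, ReR, ImR, Re0, Im0, Re1, Im1, Ren, Imn, Rew, Imw).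
Ltac csolve := apply: ceq; cnorm;
  have := s3p R 1; have := s3q R 1; have := s3p R 2; have := s3q R 2; have := s3p R 3; have := s3q R 3;
  have := s3p R 4; have := s3q R 4; rewrite /= ?expr0 ?expr1 ?exprS ?mulr1; lra.
Ltac mxsolve := try unfold ket0, Defs.adj, Defs.proj; apply/matrixP;
  case=> [[|[|[|?]]] ?] //; case=> [[|[|[|?]]] ?] //;
  rewrite !mxE; do 3 (rewrite ?sum3 ?big_ord1 /= ?mxE /=);
  rewrite ?expr0 ?exprS ?(mul0r, mulr0, add0r, addr0, mul1r, mulr1);
  csolve.
Ltac cvsolve := try unfold ket0, Defs.adj, Defs.proj; apply/matrixP;
  case=> [[|[|[|?]]] ?] //; case=> [[|?] ?] //;
  rewrite !mxE; do 4 (rewrite ?sum3 ?big_ord1 /= ?mxE /=);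
  rewrite ?expr0 ?exprS ?(mul0r, mulr0, add0r, addr0, mul1r, mulr1);
  csolve.




Local Notation ev := (@ev R).
Local Notation N := (norrell R).
Local Notation v0 := (@v0 R).

Ltac evsolve := rewrite /ev /v0 /=; try unfold Defs.adj, Defs.proj;
  rewrite !mxE; do 4 (rewrite ?sum3 ?big_ord1 /= ?mxE /=);
  rewrite ?expr0 ?exprS ?(mul0r, mulr0, add0r, addr0, mul1r, mulr1);
  csolve.

Lemma s6 : Num.sqrt (6:R) * Num.sqrt 6 = 6.
Proof. by rewrite -expr2 sqr_sqrtr // ler0n. Qed.

Lemma normN : N = (6^-1 : R)%:C *: proj v0.
Proof.
rewrite /norrell /norrell_ket projZ.
by rewrite -invfM s6.
Qed.

Lemma trN A : \tr (N *m A) = (6^-1 : R)%:C * ev A.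
Proof.
rewrite normN -scalemxAl mxtraceZ /Defs.proj -mulmxA mxtrace_mulC trace_mx11.
by [].
Qed.

Lemma ReTr A : complex.Re (\tr (N *m A)) = 6^-1 * complex.Re (ev A).
Proof. by rewrite trN ReM ReR ImR mul0r subr0. Qed.

Lemma evP0 : ev (proj v0) = 36%:R.
Proof. evsolve. Qed.

Lemma evN : ev N = 6%:R.
Proof. rewrite normN evZ evP0. csolve. Qed.

Lemma NN : N *m N = N.
Proof. rewrite normN. mxsolve. Qed.
Lemma adjN : adj N = N.
Proof. rewrite normN. mxsolve. Qed.

Lemma suppP P : supp_proj N P -> P = N.
Proof.
move=> [PP [aP /andP [/submxP [A eA] /submxP [B eB]]]].
have h1 : P *m N = P by rewrite {1}eA -mulmxA NN -eA.
have h2 : N *m P = N by rewrite {1}eB -mulmxA PP -eB.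
have h3 : N *m P = P.
  by have := congr1 adj h1; rewrite adjM adjN aP.
by rewrite -h3 h2.
Qed.

Lemma suppNN : supp_proj N N.
Proof. by split; [exact: NN | split; [exact: adjN | rewrite !submx_refl]]. Qed.

Lemma ln2_gt0 : 0 < ln (2 : R).
Proof. by apply: ln_gt0; rewrite ltr1n. Qed.

Lemma log2_ge s : 3/2 <= s -> log2 (3/2 : R) <= log2 s.
Proof.
move=> hs; rewrite /log2; apply: ler_wpM2r; first by rewrite invr_ge0 ltW // ln2_gt0.
rewrite ler_ln ?posrE //; lra.
Qed.

Lemma mlog2_ge t : t <= 2/3 -> ((log2 (3/2 : R))%:E <= mlog2 t)%E.
Proof.
move=> ht; rewrite /mlog2; case: ifP => [t0|_]; last by rewrite leey.
rewrite lee_fin /log2 -mulNr; apply: ler_wpM2r; first by rewrite invr_ge0 ltW // ln2_gt0.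
have hinv : 3/2 <= t^-1.
  have hu : t * t^-1 = 1 by rewrite mulfV // gt_eqF.
  have : 0 < t^-1 by rewrite invr_gt0.
  nra.
have p32 : (0:R) < 3/2 by lra.
by rewrite -lnV ?posrE // ler_ln ?posrE ?invr_gt0.
Qed.

Lemma mlog2_23 : mlog2 (2/3) = (log2 (3/2 : R))%:E.
Proof.
rewrite /mlog2 ifT; last lra.
by rewrite /log2 -mulNr -lnV ?posrE ?invf_div //; lra.
Qed.

Lemma lower s tau : 0 <= s -> 0 <= complex.Re (ev tau) ->
  F_STAB ((1 + s)^-1%:C *: (N + s%:C *: tau)) -> 3/2 <= 1 + s.
Proof.
move=> s0 t0 /fstab_ev [h _].
move: h; rewrite evZ evD evZ evN.
set r := complex.Re (ev tau).
cnorm; rewrite -/r => h.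
have hu : (1 + s) * (1 + s)^-1 = 1 by rewrite mulfV // gt_eqF //; lra.
have u0 : 0 < (1 + s)^-1 by rewrite invr_gt0; lra.
have hsr : 0 <= s * r * (1 + s)^-1 by rewrite !mulr_ge0 // ltW.
nra.
Qed.

End Qt6.

Section Qt7.
Variable R : realType.
Local Notation C := R[i].
Local Notation M := 'M[C]_3.
Local Notation w := (omega R).
Local Notation X := (Xq R).
Local Notation Z := (Zq R).
Local Notation adj := (@Defs.adj R _ _).
Local Notation proj := (@Defs.proj R).

Ltac cnorm := rewrite ?(ReC, ImC, ReD, ImD, ReM, ImM, ReN, ImN, ReJ, ImJ, ReR, ImR, Re0, Im0, Re1, Im1, Ren, Imn, Rew, Imw).
Ltac csolve := apply: ceq; cnorm;
  have := s3p R 1; have := s3q R 1; have := s3p R 2; have := s3q R 2; have := s3p R 3; have := s3q R 3;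
  have := s3p R 4; have := s3q R 4; rewrite /= ?expr0 ?expr1 ?exprS ?mulr1; lra.
Ltac mxsolve := try unfold ket0, Defs.adj, Defs.proj; apply/matrixP;
  case=> [[|[|[|?]]] ?] //; case=> [[|[|[|?]]] ?] //;
  rewrite !mxE; do 3 (rewrite ?sum3 ?big_ord1 /= ?mxE /=);
  rewrite ?expr0 ?exprS ?(mul0r, mulr0, add0r, addr0, mul1r, mulr1);
  csolve.
Ltac cvsolve := try unfold ket0, Defs.adj, Defs.proj; apply/matrixP;
  case=> [[|[|[|?]]] ?] //; case=> [[|?] ?] //;
  rewrite !mxE; do 4 (rewrite ?sum3 ?big_ord1 /= ?mxE /=);
  rewrite ?expr0 ?exprS ?(mul0r, mulr0, add0r, addr0, mul1r, mulr1);
  csolve.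




Local Notation ev := (@ev R).
Local Notation N := (norrell R).
Local Notation v0 := (@v0 R).
Ltac evsolve := rewrite /ev /v0 /=; try unfold Defs.adj, Defs.proj;
  rewrite !mxE; do 4 (rewrite ?sum3 ?big_ord1 /= ?mxE /=);
  rewrite ?expr0 ?exprS ?(mul0r, mulr0, add0r, addr0, mul1r, mulr1);
  csolve.
Local Notation F_STAB := (@Defs.F_STAB R).
Local Notation pure_stab := (@Defs.pure_stab R).
Local Notation state := (@Defs.state R).
Local Notation P1 := (proj (X *m ket0 R)).
Local Notation Pp := (proj (Fm *m ket0 R)).
Local Notation Pa := (proj (Dm *m Fm *m ket0 R)).
Local Notation Pb := (proj (Dm *m (Dm *m Fm) *m ket0 R)).

Lemma fstab1 rho : pure_stab rho -> F_STAB rho.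
Proof.
move=> h; exists 1%N, (fun _ => 1), (fun _ => rho); split => //; split.
  by rewrite big_ord1.
split => //.
by rewrite big_ord1 (_ : (1:R)%:C = 1) ?scale1r.
Qed.

Lemma psP1 : pure_stab P1.
Proof. by exists X; split => //; exact: cliffX. Qed.
Lemma psPp : pure_stab Pp.
Proof. by exists Fm; split => //; exact: cliffF. Qed.
Lemma psPa : pure_stab Pa.
Proof.
exists (Dm *m Fm); split => //.
have := clifford_mul (cliffD R) (cliffF R); apply.
Qed.
Lemma psPb : pure_stab Pb.
Proof.
exists (Dm *m (Dm *m Fm)); split => //.
have := clifford_mul (cliffD R) (clifford_mul (cliffD R) (cliffF R)); apply.
Qed.

Lemma evP1 : ev P1 = 4%:R.
Proof. rewrite Xket. evsolve. Qed.

Lemma adj_proj v : adj (proj v) = proj v.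
Proof. by rewrite /Defs.proj adjM adjK. Qed.

Lemma trc111 : \tr (proj c111) = 3%:R.
Proof.
rewrite /mxtrace sum3 /Defs.proj /c111; unfold Defs.adj.
rewrite !mxE; do 2 (rewrite ?sum3 ?big_ord1 /= ?mxE /=).
csolve.
Qed.

Lemma statePp : state Pp.
Proof.
split; first split.
- exact: adj_proj.
- by move=> v; rewrite quad; exact: mulcJ_ge0.
rewrite Fket projZ k3k3 mxtraceZ trc111.
csolve.
Qed.

Definition mk9 (a00 a01 a02 a10 a11 a12 a20 a21 a22 : C) : M := \matrix_(i < 3, j < 3)
  (if i == 0 :> nat then (if j == 0 :> nat then a00 else if j == 1 :> nat then a01 else a02) else if i == 1 :> nat then (if j == 0 :> nat then a10 else if j == 1 :> nat then a11 else a12) else (if j == 0 :> nat then a20 else if j == 1 :> nat then a21 else a22)).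

Lemma mk9Z (c a00 a01 a02 a10 a11 a12 a20 a21 a22 : C) : c *: mk9 a00 a01 a02 a10 a11 a12 a20 a21 a22 = mk9 (c * a00) (c * a01) (c * a02) (c * a10) (c * a11) (c * a12) (c * a20) (c * a21) (c * a22).
Proof. apply/matrixP; case=> [[|[|[|?]]] ?] //; case=> [[|[|[|?]]] ?] //; by rewrite !mxE. Qed.

Lemma mk9D (a00 a01 a02 a10 a11 a12 a20 a21 a22 b00 b01 b02 b10 b11 b12 b20 b21 b22 : C) : mk9 a00 a01 a02 a10 a11 a12 a20 a21 a22 + mk9 b00 b01 b02 b10 b11 b12 b20 b21 b22 = mk9 (a00 + b00) (a01 + b01) (a02 + b02) (a10 + b10) (a11 + b11) (a12 + b12) (a20 + b20) (a21 + b21) (a22 + b22).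
Proof. apply/matrixP; case=> [[|[|[|?]]] ?] //; case=> [[|[|[|?]]] ?] //; by rewrite !mxE. Qed.

Lemma mk9_eq (a00 a01 a02 a10 a11 a12 a20 a21 a22 b00 b01 b02 b10 b11 b12 b20 b21 b22 : C) : a00 = b00 -> a01 = b01 -> a02 = b02 -> a10 = b10 -> a11 = b11 -> a12 = b12 -> a20 = b20 -> a21 = b21 -> a22 = b22 -> mk9 a00 a01 a02 a10 a11 a12 a20 a21 a22 = mk9 b00 b01 b02 b10 b11 b12 b20 b21 b22.
Proof. by move=> -> -> -> -> -> -> -> -> ->. Qed.

Lemma projv0 : proj v0 = mk9 1 (-2%:R) 1 (-2%:R) 4%:R (-2%:R) 1 (-2%:R) 1.
Proof. rewrite /mk9. mxsolve. Qed.
Lemma projc111 : proj c111 = mk9 1 1 1 1 1 1 1 1 1.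
Proof. rewrite /mk9. mxsolve. Qed.
Lemma proje1 : proj e1 = mk9 0 0 0 0 1 0 0 0 0.
Proof. rewrite /mk9. mxsolve. Qed.
Lemma projca : proj ca = mk9 1 (w * w) 1 w 1 w 1 (w * w) 1.
Proof. rewrite /mk9. mxsolve. Qed.
Lemma projcb : proj cb = mk9 1 w 1 (w * w) 1 (w * w) 1 w 1.
Proof. rewrite /mk9. mxsolve. Qed.

Lemma sumM3 (f : 'I_3 -> M) : \sum_(k < 3) f k = f 0 + f 1 + f 2.
Proof. rewrite !big_ord_recr big_ord0 /= add0r. by congr (f _ + f _ + f _); apply: val_inj. Qed.

Definition rhos (k : 'I_3) : M := if k == 0 :> nat then P1 else if k == 1 :> nat then Pa else Pb.

Lemma half : (1 + 2^-1 : R)^-1 = 2/3.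
Proof. by rewrite (_ : 1 + 2^-1 = 3/2 :> R) ?invf_div //; lra. Qed.

Lemma ident : (1 + 2^-1 : R)^-1%:C *: (N + (2^-1 : R)%:C *: Pp) =
  \sum_(k < 3) (3^-1 : R)%:C *: rhos k.
Proof.
rewrite sumM3 /rhos /= Xket Fket DFket DDFket !projZ k3k3 normN half.
rewrite projv0 projc111 proje1 projca projcb !mk9Z !mk9D !mk9Z.
by apply: mk9_eq; csolve.
Qed.

Lemma FsD : F_STAB ((1 + 2^-1 : R)^-1%:C *: (N + (2^-1 : R)%:C *: Pp)).
Proof.
rewrite ident; exists 3%N, (fun _ => 3^-1), rhos; split.
  by move=> _; rewrite invr_ge0 ler0n.
split.
  by rewrite sumr_const card_ord -mulr_natr; lra.
split => //.
case=> [[|[|[|?]]] ?] //=; [exact: psP1 | exact: psPa | exact: psPb].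
Qed.

Lemma Dmin_val : Dmin F_STAB N = (log2 (3/2 : R))%:E.
Proof.
apply/eqP; rewrite eq_le; apply/andP; split.
- apply: ereal_inf_lbound; exists P1, N; split; first exact: fstab1 psP1.
  split; first exact: suppNN.
  rewrite ReTr evP1 Ren (_ : 6^-1 * 4%:R = 2/3 :> R) ?mlog2_23 //; lra.
- apply/ereal_infP => y [sg [P [Fs [sP ->]]]].
  rewrite (suppP sP); apply: mlog2_ge; rewrite ReTr.
  have [h _] := fstab_ev Fs; lra.
Qed.

Lemma Dmax_val : Dmax F_STAB N = (log2 (3/2 : R))%:E.
Proof.
apply/eqP; rewrite eq_le; apply/andP; split.
- apply: ereal_inf_lbound; exists 2^-1, Pp; split; first by rewrite invr_ge0 ler0n.
  split; first exact: statePp.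
  split; first exact: FsD.
  by rewrite (_ : 1 + 2^-1 = 3/2 :> R) //; lra.
- apply/ereal_infP => y [s [tau [s0 [[[_ pt] _] [Fs ->]]]]].
  rewrite lee_fin; apply: log2_ge; apply: (lower s0 _ Fs).
  by have := pt v0; rewrite lecE => /andP [_]; rewrite Re0.
Qed.

Lemma Ds_val : Ds F_STAB N = (log2 (3/2 : R))%:E.
Proof.
apply/eqP; rewrite eq_le; apply/andP; split.
- apply: ereal_inf_lbound; exists 2^-1, Pp; split; first by rewrite invr_ge0 ler0n.
  split; first exact: fstab1 psPp.
  split; first exact: FsD.
  by rewrite (_ : 1 + 2^-1 = 3/2 :> R) //; lra.
- apply/ereal_infP => y [s [tau [s0 [Ft [Fs ->]]]]].
  rewrite lee_fin; apply: log2_ge; apply: (lower s0 _ Fs).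
  by have [_ h] := fstab_ev Ft.
Qed.

End Qt7.

Theorem proposition8 (R : realType) :
  Dmin (@F_STAB R) (norrell R) = (log2 (3 / 2 : R))%:E /\
  Dmax (@F_STAB R) (norrell R) = (log2 (3 / 2 : R))%:E /\
  Ds (@F_STAB R) (norrell R) = (log2 (3 / 2 : R))%:E.
Proof. by split; [exact: Dmin_val | split; [exact: Dmax_val | exact: Ds_val]]. Qed.
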